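(* Let $n \geq 3$. Then $$\max_{G} T_{\min}(G) = 2n-4 \qquad\text{and}\qquad \max_{G} T_{\max}(G) = \left\lfloor n^2/2 \right\rfloor - 1,$$ where both maxima range over all connected, undirected (simple) graphs $G$ on $n$ vertices.
   Context: Let $G=(V,E)$ be a connected undirected graph with $|V| = n$. An ordering is a bijection $\pi: V \to \{1,\dots,n\}$. For vertices $u,v$, let $d_G(u,v)$ denote the length (number of edges) of a shortest path from $u$ to $v$ in $G$. The communication time of ordering $\pi$ on $G$ is $$T(G,\pi) = \sum_{i=1}^{n-1} d_G\big(\pi^{-1}(i), \pi^{-1}(i+1)\big).$$ Define $T_{\min}(G) = \min_{\pi} T(G,\pi)$ and $T_{\max}(G) = \max_{\pi} T(G,\pi)$, the minimum and maximum over all orderings $\pi$. *)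

(* Defs.v *)
From mathcomp Require Import all_boot all_fingroup.
Set Implicit Arguments. Unset Strict Implicit. Unset Printing Implicit Defensive.

Definition simple_graph (T : finType) (e : rel T) : Prop :=
  symmetric e /\ irreflexive e.

Definition connected_graph (T : finType) (e : rel T) : Prop :=
  forall u v : T, connect e u v.

Definition walk_of_length (T : finType) (e : rel T) (u v : T) (k : nat) : bool :=
  [exists p : k.-tuple T, path e u p && (last u p == v)].

(* In a graph on #|T| vertices any reachable vertex is at
   distance < #|T|, so minimizing over k < #|T| suffices; the default
   value #|T| is only returned for unreachable pairs (never the case in
   a connected graph). *)
Definition dist (T : finType) (e : rel T) (u v : T) : nat :=
  \big[minn/#|T|]_(k < #|T| | walk_of_length e u v k) k.

(* An ordering is given by a
   permutation s of the vertices: s i is the vertex in position i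
   (so s = pi^-1). *)
Definition comm_time (T : finType) (e : rel T) (s : {perm T}) : nat :=
  let l := [seq s x | x <- enum T] in
  \sum_(p <- zip l (behead l)) dist e p.1 p.2.

Definition Tmax (T : finType) (e : rel T) : nat :=
  \max_(s : {perm T}) comm_time e s.

(* T_min(G): minimum over all orderings (the neutral element Tmax e
   is itself >= every communication time, so it does not affect the
   minimum over the nonempty set of permutations). *)
Definition Tmin (T : finType) (e : rel T) : nat :=
  \big[minn/Tmax e]_(s : {perm T}) comm_time e s.

(* Main.v *)
Require Import Defs.
From mathcomp Require Import all_boot all_fingroup zify.
Set Implicit Arguments. Unset Strict Implicit. Unset Printing Implicit Defensive.


Lemma bigminn_le (I : eqType) (r : seq I) (P : pred I) (F : I -> nat) x0 j :
  j \in r -> P j -> \big[minn/x0]_(i <- r | P i) F i <= F j.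
Proof.
elim: r => // a r IH; rewrite in_cons big_cons => /orP[/eqP<- ->|jr Pj].
  by rewrite geq_min leqnn.
case: (P a); last exact: IH.
by rewrite geq_min IH ?orbT.
Qed.

Lemma bigminn_fin (I : finType) (P : pred I) (F : I -> nat) x0 j :
  P j -> \big[minn/x0]_(i | P i) F i <= F j.
Proof. by move=> Pj; apply: bigminn_le; rewrite ?mem_index_enum. Qed.

Section Walks.
Variables (T : finType) (e : rel T).

Lemma walk0 u v : walk_of_length e u v 0 = (u == v).
Proof.
apply/existsP/idP => [[p /andP[_]]|/eqP->].
  by rewrite tuple0.
by exists [tuple]; rewrite /= eqxx.
Qed.

Lemma walkS u v k :
  walk_of_length e u v k.+1 = [exists w, e u w && walk_of_length e w v k].
Proof.
apply/existsP/existsP => [[p]|[w /andP[euw /existsP[p /andP[pp lp]]]]].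
  case/tupleP: p => x p /= /andP[/andP[eux pp] lp].
  by exists x; rewrite eux; apply/existsP; exists p; rewrite pp.
by exists [tuple of w :: p]; rewrite /= euw pp.
Qed.

Lemma walk_cat a b u v w :
  walk_of_length e u v a -> walk_of_length e v w b ->
  walk_of_length e u w (a + b).
Proof.
elim: a u => [|a IH] u.
  by rewrite walk0 => /eqP->.
rewrite walkS addSn walkS => /existsP[x /andP[eux wx]] wb.
by apply/existsP; exists x; rewrite eux (IH _ wx wb).
Qed.

Lemma walk_split a b u w :
  walk_of_length e u w (a + b) ->
  exists v, walk_of_length e u v a /\ walk_of_length e v w b.
Proof.
elim: a u => [|a IH] u.
  by move=> h; exists u; rewrite walk0 eqxx.
rewrite addSn walkS => /existsP[x /andP[eux /IH[v [h1 h2]]]].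
by exists v; split=> //; rewrite walkS; apply/existsP; exists x; rewrite eux.
Qed.

Lemma walk1 u v : walk_of_length e u v 1 = e u v.
Proof.
rewrite walkS; apply/existsP/idP => [[w /andP[euw]]|euv].
  by rewrite walk0 => /eqP<-.
by exists v; rewrite euv walk0 eqxx.
Qed.

Hypothesis esym : symmetric e.

Lemma walk_rev k u v : walk_of_length e u v k -> walk_of_length e v u k.
Proof.
elim: k u => [|k IH] u.
  by rewrite !walk0 eq_sym.
rewrite walkS => /existsP[w /andP[euw wk]].
rewrite -addn1; apply: walk_cat (IH _ wk) _.
by rewrite walk1 esym.
Qed.

Hypothesis conn : connected_graph e.

Lemma walk_exists u v : exists2 k, k < #|T| & walk_of_length e u v k.
Proof.
have /connectP[p pp lp] := conn u v.
rewrite lp; case: (shortenP pp) => q qq uq _.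
have sz : size q < #|T|.
  have := card_uniqP uq => c.
  by rewrite -ltnS -[(size q).+1]/(size (u :: q)) -c ltnS max_card.
exists (size q) => //.
apply/existsP; exists (in_tuple q); by rewrite /= qq eqxx.
Qed.

Definition d u v := dist e u v.

Lemma dist_walk u v : walk_of_length e u v (d u v) /\ d u v < #|T|.
Proof.
have [k lk wk] := walk_exists u v.
rewrite /d /dist.
pose P x := (x < #|T|) && walk_of_length e u v x || (x == #|T|).
have : P (\big[minn/#|T|]_(k0 < #|T| | walk_of_length e u v k0) k0).
  apply: (big_ind P); first by rewrite /P eqxx orbT.
    move=> x y Px Py; rewrite /minn; by case: ifP.
  by move=> i wi; rewrite /P ltn_ord wi.
have : \big[minn/#|T|]_(k0 < #|T| | walk_of_length e u v k0) k0 <= k.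
  by apply: (@bigminn_fin _ _ _ _ (Ordinal lk)).
rewrite /P => hk /orP[/andP[a b]|/eqP h]; first by [].
by move: hk; rewrite h leqNgt lk.
Qed.

Lemma dist_min u v k : walk_of_length e u v k -> d u v <= k.
Proof.
move=> wk; rewrite /d /dist.
case: (ltnP k #|T|) => lk.
  by apply: (@bigminn_fin _ _ _ _ (Ordinal lk)).
apply: leq_trans lk.
elim/big_rec: _ => // i x _ h; by rewrite geq_min h orbT.
Qed.

Lemma d_refl u : d u u = 0.
Proof. by apply/eqP; rewrite -leqn0 dist_min // walk0. Qed.

Lemma d_eq0 u v : d u v = 0 -> u = v.
Proof. by have [w _] := dist_walk u v => h; move: w; rewrite h walk0 => /eqP. Qed.

Lemma d_edge u v : e u v -> d u v <= 1.
Proof. by move=> h; apply: dist_min; rewrite walk1. Qed.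

Lemma d_tri u v w : d u w <= d u v + d v w.
Proof.
apply: dist_min; apply: walk_cat; exact: (dist_walk _ _).1.
Qed.

Lemma d_sym u v : d u v = d v u.
Proof.
apply/eqP; rewrite eqn_leq; apply/andP; split; apply: dist_min; apply: walk_rev;
exact: (dist_walk _ _).1.
Qed.

Lemma d_lt u v : d u v < #|T|.
Proof. exact: (dist_walk _ _).2. Qed.

Lemma d_step c v k : d c v = k.+1 -> exists u, e c u /\ d u v = k.
Proof.
move=> h; have [w _] := dist_walk c v; move: w; rewrite h walkS.
case/existsP=> u /andP[ecu wk]; exists u; split => //.
apply/eqP; rewrite eqn_leq dist_min //=.
have := d_tri c u v; rewrite h => h2.
have := d_edge ecu; lia.
Qed.

Lemma d_layer c v j : j <= d c v -> exists w, d c w = j /\ d w v = d c v - j.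
Proof.
move=> hj; have [w _] := dist_walk c v; move: w.
rewrite -{1}(subnKC hj) => /walk_split[x [h1 h2]].
exists x; have a := dist_min h1; have b := dist_min h2.
have := d_tri c x v; lia.
Qed.

End Walks.


Section Cost.
Variables (T : finType) (e : rel T).

Definition cost (l : seq T) := \sum_(p <- zip l (behead l)) d e p.1 p.2.

Lemma cost_nil : cost [::] = 0. Proof. by rewrite /cost big_nil. Qed.
Lemma cost1 x : cost [:: x] = 0. Proof. by rewrite /cost big_nil. Qed.
Lemma cost_cons2 x y l : cost (x :: y :: l) = d e x y + cost (y :: l).
Proof. by rewrite /cost /= big_cons. Qed.

Fixpoint ins (u v : T) (s : seq T) :=
  if s is x :: s' then (if x == u then x :: v :: s' else x :: ins u v s') else [::].

Lemma ins_perm u v s : u \in s -> perm_eq (ins u v s) (v :: s).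
Proof.
elim: s => // x s IH; rewrite in_cons /=.
case: ifP => [/eqP<- _|/negbT xu /orP[/eqP ux|us]].
  by apply/seq.permP => p /=; rewrite addnCA.
  by rewrite ux eqxx in xu.
apply: (@perm_trans _ (x :: v :: s)); first by rewrite perm_cons; exact: IH.
by apply/seq.permP => p /=; rewrite addnCA.
Qed.

Lemma ins_head u v s x0 : head x0 (ins u v s) = head x0 s.
Proof. by case: s => //= x s; case: ifP. Qed.

Lemma ins_nil u v s : (ins u v s == [::]) = (s == [::]).
Proof. by case: s => //= x s; case: ifP. Qed.

Hypothesis esym : symmetric e.
Hypothesis conn : connected_graph e.

Lemma cost_ins u v s : u \in s -> e u v -> cost (ins u v s) <= cost s + 2.
Proof.
move=> us euv; have duv := d_edge euv.
elim: s us => // x s IH; rewrite in_cons /=.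
case: ifP => [/eqP-> _|/negbT xu /orP[/eqP ux|us]].
  case: s {IH} => [|y s]; first by rewrite cost_cons2 !cost1; lia.
  rewrite !cost_cons2.
  have := d_tri conn v u y; rewrite (d_sym esym conn v u); lia.
  by rewrite ux eqxx in xu.
case: s IH us => // y s IH us.
case Hi: (ins u v (y :: s)) => [|z s']; first by move/eqP: Hi; rewrite ins_nil.
rewrite !cost_cons2 -Hi.
have: z = y by move: (ins_head u v (y :: s) y); rewrite Hi.
move=> ->; rewrite -addnA leq_add2l; exact: IH.
Qed.

Lemma crossing_path (s : seq T) x p :
  path e x p -> x \in s -> last x p \notin s ->
  exists u v, [/\ u \in s, v \notin s & e u v].
Proof.
elim: p x => [|y p IH] x /=; first by move=> _ ->.
case/andP=> exy pp xs lp.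
case ys: (y \in s); first exact: IH ys lp.
by exists x, y; rewrite ys.
Qed.

Lemma crossing (s : seq T) a :
  a \in s -> size s < #|T| -> uniq s ->
  exists u v, [/\ u \in s, v \notin s & e u v].
Proof.
move=> as_ ss us.
have [v vs] : exists v, v \notin s.
  apply/existsP; rewrite -negb_forall; apply/negP => /forallP h.
  have : #|T| <= #|s| by apply: subset_leq_card; apply/subsetP=> z _; exact: h.
  by rewrite (card_uniqP us) leqNgt ss.
have /connectP[p pp lp] := conn a v.
by apply: (crossing_path pp as_); rewrite -lp.
Qed.

Lemma grow k : 3 <= k <= #|T| ->
  exists s, [/\ uniq s, size s = k & cost s <= 2 * k - 4].
Proof.
case/andP; elim: k => // k IH.
rewrite ltnS leq_eqVlt => /orP[/eqP k2 hk|k3 hk].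
  subst k.
  have [a _] : exists a : T, true.
    by apply/existsP; rewrite -lt0n; apply: leq_trans hk.
  have h1 : size [:: a] < #|T| by apply: leq_trans hk.
  have [u [b [ua ba eab]]] := crossing (mem_head a [::]) h1 (erefl _).
  move: ua eab; rewrite mem_seq1 => /eqP -> eab.
  have uab2 : uniq [:: a; b] by move: ba; rewrite /= andbT !inE eq_sym.
  have [w [c [uab cab euc]]] := crossing (mem_head a [:: b]) hk uab2.
  move: uab cab euc; rewrite !inE negb_or => /orP[]/eqP-> /andP[ca cb] euc.
    exists [:: c; a; b]; split => //.
      by move: ba; rewrite /= !inE negb_or ca cb eq_sym => ->.
    rewrite !cost_cons2 cost1 d_sym //.
    have := d_edge euc; have := d_edge eab; lia.
  exists [:: a; b; c]; split => //.
    by move: ba; rewrite /= !inE negb_or => ba; rewrite eq_sym ba eq_sym ca eq_sym cb.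
  rewrite !cost_cons2 cost1.
  have := d_edge euc; have := d_edge eab; lia.
have [s [us ss cs]] := IH k3 (ltnW hk).
have [x xs] : exists x, x \in s.
  by case: s ss {us cs} => [|x s]; [move=> ss; move: k3; rewrite -ss | exists x; rewrite mem_head].
have hs : size s < #|T| by rewrite ss.
have [u [v [us' vs euv]]] := crossing xs hs us.
have P := ins_perm v us'.
exists (ins u v s); split.
    by rewrite (perm_uniq P) /= vs us.
  by rewrite (perm_size P) /= ss.
have := cost_ins us' euv; lia.
Qed.

End Cost.


Lemma sum_ind (T : finType) (P : pred T) : \sum_(v : T) (P v : nat) = #|P|.
Proof.
rewrite -sum1_card [RHS]big_mkcond /=; apply: eq_bigr => v _; by rewrite -[P v]/(v \in P); case: (v \in P).
Qed.

Lemma sum_set (T : finType) (A : {set T}) : \sum_(v : T) (v \in A : nat) = #|A|.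
Proof.
rewrite -sum1_card [RHS]big_mkcond /=; apply: eq_bigr => v _; by case: (v \in A).
Qed.

Lemma sum_lt_min N m : \sum_(k < N) (k < m : nat) = minn m N.
Proof.
elim: N => [|N IH]; first by rewrite big_ord0 minn0.
rewrite big_ord_recr /= IH; case: ltnP => h; lia.
Qed.

Lemma arith_sum m N : 4 * \sum_(k < N) (m - 2 * k) <= (m + 1) ^ 2.
Proof.
elim: N m => [|N IH] m; first by rewrite big_ord0.
rewrite big_ord_recl /=.
have := IH (m - 2).
have -> : \sum_(i < N) (m - 2 * (bump 0 i)) = \sum_(i < N) (m - 2 - 2 * i).
  by apply: eq_bigr => i _; rewrite /bump /=; lia.
move: (\sum_(i < N) _) => S h.
case: (ltnP m 2) => hm.
  have: S = 0 by lia.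
  move=> ->; lia.
nia.
Qed.

Section Center.
Variables (T : finType) (e : rel T).
Hypothesis esym : symmetric e.
Hypothesis conn : connected_graph e.

Local Notation d := (d e).

Definition Wt c := \sum_(v : T) d c v.

Lemma A_bound c u : (forall x, Wt c <= Wt x) -> e c u ->
  2 * #|[set v | d u v < d c v]| <= #|T|.
Proof.
move=> cmin ecu.
set A := [set v | d u v < d c v].
have h : \sum_(v : T) (d u v + (v \in A) + (v \in A)) <= \sum_(v : T) (d c v + 1).
  apply: leq_sum => v _; rewrite inE.
  have := d_tri conn u c v; have := d_edge ecu; rewrite d_sym //.
  case: ltnP => /= h1 h2 h3; lia.
have E1 : \sum_(i : T) 1 = #|T| by rewrite sum1_card.
move: h; rewrite !big_split /= sum_set E1.
have := cmin u; rewrite /Wt => h1 h2.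
have h3 : \sum_v d u v + #|A| + #|A| <= \sum_v d c v + #|T| := h2.
rewrite mul2n -addnn -(leq_add2l (\sum_v d u v)) addnA; apply: leq_trans h3 _; by rewrite leq_add2r.
Qed.

Definition Ly c i := [set v | d c v == i].
Definition Sk c k := [set v | k <= d c v].

Lemma count_layers c (X : {set T}) k :
  #|X| = \sum_(i < k) #|X :&: Ly c i| + #|X :&: Sk c k|.
Proof.
elim: k => [|k IH].
  rewrite big_ord0 add0n; apply: eq_card => v; by rewrite !inE andbT.
rewrite big_ord_recr /= IH -addnA; congr (_ + _).
rewrite -(cardsID (Ly c k) (X :&: Sk c k)); congr (_ + _);
  apply: eq_card => v; rewrite !inE; case: (ltngtP k (d c v)) => h;
  rewrite ?andbT ?andbF //=.
Qed.


Lemma far_in_A c w u j : 0 < j -> d c w = j -> (forall w', d c w' = j -> w' = w) ->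
  d u w = j - 1 -> forall v, j <= d c v -> d u v < d c v.
Proof.
move=> j0 dcw uniqw duw v hv.
have [w' [h1 h2]] := d_layer conn hv.
have := uniqw _ h1 => eww; subst w'.
have := d_tri conn u w v; lia.
Qed.

Lemma sum_const2 k : \sum_(i < k) 2 = 2 * k.
Proof. by rewrite big_const_ord iter_addn_0 mulnC. Qed.

Lemma N_bound c k : (forall x, Wt c <= Wt x) -> 0 < k ->
  #|Sk c k| + 2 * k <= #|T| + 1 \/ #|Sk c k| = 0.
Proof.
move=> cmin k0.
case: (boolP [exists i : 'I_k, (0 < i) && (#|Ly c i| <= 1)]) => [/existsP[[j jk] /andP[j0 Lj]]|hall].
  move: j0 Lj => /= j0 Lj.
  case: (posnP #|Sk c k|) => hS; first by right.
  left; have [v0] := card_gt0P hS; rewrite inE => hv0.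
  have [w [dcw _]] := d_layer conn (ltnW (leq_trans jk hv0)).
  have uniqw : forall w', d c w' = j -> w' = w.
    move=> w' dcw'; apply/eqP; apply: contraLR Lj => nw; rewrite -ltnNge.
    have : [set w'; w] \subset Ly c j by apply/subsetP => z; rewrite !inE => /orP[]/eqP->; rewrite ?dcw ?dcw'.
    by move/subset_leq_card; rewrite cards2 nw.
  have hw1 : d c w = (j - 1).+1 by rewrite dcw; lia.
  have [u [ecu duw]] := d_step conn hw1.
  have far := far_in_A j0 dcw uniqw duw.
  set A := [set v | d u v < d c v].
  have hA : 2 * #|A| <= #|T| := A_bound cmin ecu.
  have := count_layers c A k.
  have -> : #|A :&: Sk c k| = #|Sk c k|.
    apply: eq_card => v; rewrite !inE; case: (leqP k (d c v)) => h; rewrite ?andbT ?andbF //.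
    by apply: far; apply: leq_trans h; apply: ltnW.
  have hsum : k.-1 <= \sum_(i < k) #|A :&: Ly c i|.
    have hk : k = k.-1.+1 by lia.
    move: (k.-1) hk => k' hk; rewrite hk in hv0 * => /=.
    rewrite big_ord_recl /=.
    apply: leq_trans (leq_addl _ _).
    have e1 : \sum_(i < k') 1 = k' by rewrite big_const_ord iter_addn_0 mul1n.
    rewrite -{1}e1; apply: leq_sum => i _; rewrite /bump /= add1n.
    apply/card_gt0P.
    case: (leqP j i.+1) => hij.
      have hh : i.+1 <= d c v0 by apply: leq_trans hv0; rewrite ltnS ltnW.
      have [r [dcr _]] := d_layer conn hh.
      exists r; rewrite !inE dcr eqxx andbT; rewrite -dcr; apply: far; by rewrite dcr.
    have hi : i <= d u w by rewrite duw; lia.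
    have [r [dur drw]] := d_layer conn hi.
    have h1 := d_tri conn c u r; have h2 := d_tri conn c r w; have h3 := d_edge ecu.
    have dcr : d c r = i.+1 by lia.
    by exists r; rewrite !inE dcr eqxx andbT; lia.
  move=> hc; move: hA; set N := (X in _ <= X + 1); move=> hA.
  have hA2 : 2 * #|A| <= N := hA.
  lia.
left.
have := count_layers c [set: T] k.
rewrite cardsT setTI.
have hk : k = k.-1.+1 by lia.
move: (k.-1) hk => k' hk; subst k.
rewrite big_ord_recl /=.
have h0 : 0 < #|[set: T] :&: Ly c 0|.
  by apply/card_gt0P; exists c; rewrite !inE d_refl.
have hs : 2 * k' <= \sum_(i < k') #|[set: T] :&: Ly c (bump 0 i)|.
  rewrite -sum_const2; apply: leq_sum => i _.
  move: hall; rewrite negb_exists => /forallP /(_ (lift ord0 i)).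
  by rewrite /= /bump /= add1n setTI -ltnNge.
move=> hc; rewrite [in X in _ <= X]hc; clear hc; move: h0 hs; move: (\sum_(i < k') _) => Sm; move: (#|_ :&: Ly c 0|) => L0; lia.
Qed.

End Center.


Section Final2.
Variables (T : finType) (e : rel T).
Hypothesis esym : symmetric e.
Hypothesis conn : connected_graph e.
Local Notation d := (d e).

Lemma Wt_layers c : Wt e c = \sum_(k < #|T|) #|Sk e c k.+1|.
Proof.
rewrite /Wt.
have -> : \sum_(v : T) d c v = \sum_(v : T) \sum_(k < #|T|) (k < d c v : nat).
  apply: eq_bigr => v _; rewrite sum_lt_min.
  by have := d_lt conn c v; lia.
rewrite exchange_big /=; apply: eq_bigr => k _.
rewrite -sum_set; apply: eq_bigr => v _; by rewrite inE.
Qed.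

Lemma Wt_bound c : (forall x, Wt e c <= Wt e x) -> 4 * Wt e c <= #|T| ^ 2.
Proof.
move=> cmin; rewrite Wt_layers.
have h : \sum_(k < #|T|) #|Sk e c k.+1| <= \sum_(k < #|T|) (#|T| - 1 - 2 * k).
  apply: leq_sum => k _.
  case: (N_bound esym conn (k := k.+1) cmin (ltn0Sn k)); lia.
have := arith_sum (#|T| - 1) #|T|.
move: h; move: (\sum_(k < #|T|) #|Sk e c k.+1|) (\sum_(k < #|T|) (#|T| - 1 - 2 * k)) => S1 S2.
case: #|T| => [|n] h1 h2; first lia.
move: h2; have -> : n.+1 - 1 + 1 = n.+1 by lia.
lia.
Qed.

Lemma center_exists : 0 < #|T| -> exists c, 4 * Wt e c <= #|T| ^ 2.
Proof.
move=> /card_gt0P[x0 _].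
exists [arg min_(x < x0) Wt e x]; apply: Wt_bound.
case: arg_minnP => // c _ h x; exact: h.
Qed.

Lemma cost_center c x l :
  cost e (x :: l) + d c x + d c (last x l) <= 2 * \sum_(v <- x :: l) d c v.
Proof.
elim: l x => [|y l IH] x.
  rewrite cost1 big_cons big_nil /=; lia.
rewrite cost_cons2 big_cons /= .
have := IH y; rewrite big_cons.
have := d_tri conn x c y; rewrite (d_sym esym conn x c).
lia.
Qed.

Lemma perm_cost_bound (p : {perm T}) c : 1 < #|T| ->
  comm_time e p + 1 <= 2 * Wt e c.
Proof.
move=> hT.
rewrite /comm_time.
set l := [seq p x | x <- enum T].
have ul : uniq l by rewrite map_inj_uniq ?enum_uniq //; exact: perm_inj.
have sl : size l = #|T| by rewrite size_map -cardE.
have allin : forall v, v \in l.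
  move=> v; apply/mapP; exists ((p^-1)%g v); by rewrite ?mem_enum ?permKV.
case El : l sl ul => [|x l'] sl ul; first by move: hT; rewrite -sl.
have := cost_center c x l'.
rewrite -El.
have -> : \sum_(v <- l) d c v = Wt e c.
  have ul2 : uniq l by rewrite El. rewrite /Wt (big_uniq _ ul2); transitivity (\sum_(v in l) d c v); first by [].
  by apply: eq_bigl => v; rewrite allin.
have : d c x + d c (last x l') >= 1.
  case: l' El sl ul => [|y l''] El sl ul; first by move: hT; rewrite -sl.
  have xl : x != last y l''.
    move: ul; rewrite /= => /andP[h _]; apply: contra h => /eqP->.
    by rewrite mem_last.
  case: (posnP (d c x)) => h1; last by lia.
  have := d_eq0 conn h1 => cx; subst x.
  case: (posnP (d c (last c (y :: l'')))) => h2; last by lia.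
  by have := d_eq0 conn h2 => /= h3; rewrite -h3 eqxx in xl.
rewrite /cost /d; lia.
Qed.

End Final2.


Lemma perm_of_seq n (s : seq 'I_n) (x0 : 'I_n) : uniq s -> size s = n ->
  exists p : {perm 'I_n}, [seq p x | x <- enum 'I_n] = s.
Proof.
move=> us ss.
have inj : injective (fun i : 'I_n => nth x0 s i).
  move=> i j /eqP; rewrite nth_uniq ?ss // => /eqP; exact: val_inj.
exists (perm inj).
rewrite (eq_map (permE inj)).
rewrite (map_comp (nth x0 s) val) val_enum_ord -{2}ss.
by rewrite -{3}(mkseq_nth x0 s) ss.
Qed.

Lemma Tmin_le (T : finType) (e : rel T) (p : {perm T}) : Tmin e <= comm_time e p.
Proof. exact: bigminn_fin. Qed.

Lemma comm_time_le_Tmax (T : finType) (e : rel T) (p : {perm T}) : comm_time e p <= Tmax e.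
Proof. exact: leq_bigmax. Qed.

Lemma Tmin_ge (T : finType) (e : rel T) m :
  (forall p : {perm T}, m <= comm_time e p) -> m <= Tmin e.
Proof.
move=> h; rewrite /Tmin.
apply: (big_ind (fun x => m <= x)).
- by apply: leq_trans (h 1%g) (comm_time_le_Tmax _ _).
- by move=> x y hx hy; rewrite leq_min hx hy.
- by move=> i _; apply: h.
Qed.

Lemma part1_upper n (e : rel 'I_n) : 3 <= n -> simple_graph e -> connected_graph e ->
  Tmin e <= 2 * n - 4.
Proof.
move=> hn [esym _] conn.
have := grow esym conn (k := n); rewrite card_ord hn leqnn => /(_ isT).
case=> s [us ss cs].
have x0 : 'I_n by exists 0; lia.
have [p hp] := perm_of_seq x0 us ss.
apply: leq_trans (Tmin_le e p) _.
by rewrite /comm_time hp.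
Qed.

Definition estar n : rel 'I_n :=
  fun i j => ((val i == 0) && (val j != 0)) || ((val j == 0) && (val i != 0)).

Lemma star_simple n : simple_graph (@estar n).
Proof.
split; first by move=> i j; rewrite /estar orbC.
by move=> i; rewrite /estar; case: (val i == 0).
Qed.

Lemma star_conn n : connected_graph (@estar n).
Proof.
move=> u v.
have c0 : 0 < n by case: u => u hu; lia.
pose c := Ordinal c0.
have hc : forall w, connect (@estar n) w c.
  move=> w; case: (boolP (val w == 0)) => hw.
    by have -> : w = c by apply: val_inj; apply/eqP.
  by apply: connect1; rewrite /estar /= andbF; exact: hw.
apply: connect_trans (hc u) _.
rewrite (sym_connect_sym (@star_simple n).1); exact: hc.
Qed.

Lemma star_dist n (x y : 'I_n) : x != y ->
  2 <= d (@estar n) x y + (val x == 0) + (val y == 0).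
Proof.
move=> xy.
have [w _] := dist_walk (@star_conn n) x y.
move: w; case E: (d (@estar n) x y) => [|[|k]] w.
- by move: w; rewrite walk0 (negbTE xy).
- move: w; rewrite walk1 /estar.
  by case/orP=> /andP[/eqP-> _]; rewrite ?eqxx /=; case: (val y == 0); case: (val x == 0).
- lia.
Qed.

Lemma star_cost n (y : 'I_n) l : uniq (y :: l) ->
  2 * size (y :: l) - 2 + (val y == 0) <=
  cost (@estar n) (y :: l) + 2 * count (fun z : 'I_n => val z == 0) (y :: l).
Proof.
elim: l y => [|z l IH] y.
  by rewrite cost1 /=; case: (val y == 0).
move=> /= /andP[]; rewrite in_cons negb_or => /andP[yz _] u2.
have := IH z u2; have := star_dist yz.
rewrite cost_cons2 /=; lia.
Qed.

Lemma star_Tmin n : 3 <= n -> Tmin (@estar n) = 2 * n - 4.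
Proof.
move=> hn; apply/eqP; rewrite eqn_leq part1_upper ?star_simple ?star_conn //=.
apply: Tmin_ge => p; rewrite /comm_time.
set l := [seq p x | x <- enum 'I_n].
have ul : uniq l by rewrite map_inj_uniq ?enum_uniq //; exact: perm_inj.
have sl : size l = n by rewrite size_map -cardE card_ord.
have cnt : count (fun z : 'I_n => val z == 0) l <= 1.
  have c0 : 0 < n by lia.
  have -> : count (fun z : 'I_n => val z == 0) l = count_mem (Ordinal c0) l.
    by apply: eq_count => z /=; rewrite -(val_eqE z (Ordinal c0)).
  by rewrite count_uniq_mem //; case: (_ \in _).
case El : l sl ul cnt => [|y l'] sl ul cnt; first by move: hn; rewrite -sl.
have := star_cost ul.
rewrite -El /cost /d; move: cnt sl; rewrite -El => cnt sl => h.
move: h cnt; move: (\sum_(_ <- _) _) (count _ l) (nat_of_bool (\val y == 0)) => S C b. rewrite sl; lia.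
  exact: star_simple.
exact: star_conn.
Qed.


Definition epath n : rel 'I_n := fun i j => (i.+1 == j) || (j.+1 == i).

Lemma path_simple n : simple_graph (@epath n).
Proof.
split; first by move=> i j; rewrite /epath orbC.
move=> i; rewrite /epath; apply/negP => /orP[] /eqP; lia.
Qed.

Lemma path_conn n : connected_graph (@epath n).
Proof.
have hc : forall k (hk : k < n) (c0 : 0 < n), connect (@epath n) (Ordinal hk) (Ordinal c0).
  elim=> [|k IH] hk c0.
    by have -> : Ordinal hk = Ordinal c0 by apply: val_inj.
  apply: connect_trans (IH (ltnW hk) c0).
  by apply: connect1; rewrite /epath /= eqxx orbT.
move=> [u hu] [v hv].
have c0 : 0 < n by lia.
apply: connect_trans (hc _ hu c0) _.
rewrite (sym_connect_sym (@path_simple n).1); exact: hc.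
Qed.

Lemma path_walk n (x y : 'I_n) k : walk_of_length (@epath n) x y k ->
  (x <= y + k) && (y <= x + k).
Proof.
elim: k x => [|k IH] x.
  by rewrite walk0 => /eqP->; rewrite !addn0 leqnn.
rewrite walkS => /existsP[w /andP[/orP[]/eqP h /IH]]; lia.
Qed.

Lemma path_dist n (x y : 'I_n) : (x - y) + (y - x) <= d (@epath n) x y.
Proof.
have [w _] := dist_walk (@path_conn n) x y.
have := path_walk w; lia.
Qed.

Fixpoint cabs (l : seq nat) :=
  if l is x :: l' then (if l' is y :: _ then (x - y) + (y - x) + cabs l' else 0) else 0.

Lemma cost_cabs n (l : seq 'I_n) : cabs (map val l) <= cost (@epath n) l.
Proof.
elim: l => [|x l IH]; first by [].
case: l IH => [|y l] IH; first by [].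
rewrite cost_cons2 /=; have := path_dist x y.
move: IH; rewrite /=; lia.
Qed.

Lemma cabs_iota (g : nat -> nat) a k :
  cabs (map g (iota a k.+1)) = \sum_(i < k) ((g (a + i) - g (a + i).+1) + (g (a + i).+1 - g (a + i))).
Proof.
elim: k a => [|k IH] a; first by rewrite big_ord0.
have -> : map g (iota a k.+2) = g a :: map g (iota a.+1 k.+1) by [].
have E : cabs (g a :: map g (iota a.+1 k.+1)) =
  (g a - g a.+1) + (g a.+1 - g a) + cabs (map g (iota a.+1 k.+1)) by [].
rewrite E IH big_ord_recl addn0.
congr (_ + _); apply: eq_bigr => i _; have -> : a + bump 0 i = a.+1 + i by rewrite /bump /=; lia.
by [].
Qed.

Section Zig.
Variable n : nat.
Hypothesis hn : 3 <= n.

Definition gz i := if i == 0 then n %/ 2 else if i %% 2 == 1 then i %/ 2 else n - i %/ 2.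

Lemma gz_lt i : i < n -> gz i < n.
Proof. rewrite /gz; case: ifP => [/eqP->|]; [lia|]; case: ifP; lia. Qed.

Lemma gz_inj i j : i < n -> j < n -> gz i = gz j -> i = j.
Proof.
rewrite /gz => hi hj.
repeat (case: ifP => ?); lia.
Qed.

Definition Dz i := (gz i - gz i.+1) + (gz i.+1 - gz i).

Lemma D0 : Dz 0 = n %/ 2.
Proof. rewrite /Dz /gz /=; lia. Qed.

Lemma D_odd j : 2 * j + 2 < n -> Dz (2 * j + 1) = n - 1 - 2 * j.
Proof.
move=> h; rewrite /Dz /gz.
have -> : (2 * j + 1 == 0) = false by lia.
have -> : ((2 * j + 1).+1 == 0) = false by lia.
have -> : ((2 * j + 1) %% 2 == 1) = true by lia.
have -> : ((2 * j + 1).+1 %% 2 == 1) = false by lia.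
lia.
Qed.

Lemma D_even j : 2 * j + 3 < n -> Dz (2 * j + 2) = n - 2 - 2 * j.
Proof.
move=> h; rewrite /Dz /gz.
have -> : (2 * j + 2 == 0) = false by lia.
have -> : ((2 * j + 2).+1 == 0) = false by lia.
have -> : ((2 * j + 2) %% 2 == 1) = false by lia.
have -> : ((2 * j + 2).+1 %% 2 == 1) = true by lia.
lia.
Qed.

Definition Ssum k := \sum_(i < k) Dz i.

Lemma Ssum_odd j : 2 * j + 1 < n -> Ssum (2 * j + 1) + 2 * j * (j - 1) = n %/ 2 + j * (2 * n - 3).
Proof.
elim: j => [|j IH] h.
  by rewrite /Ssum big_ord_recr big_ord0 /= D0; lia.
have -> : 2 * j.+1 + 1 = (2 * j + 1).+2 by lia.
rewrite /Ssum !big_ord_recr /= -/(Ssum (2 * j + 1)).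
have -> : (2 * j + 1).+1 = 2 * j + 2 by lia.
rewrite D_odd ?D_even; try lia.
have h2 := IH ltac:(lia).
have e1 : 2 * j * (j - 1) = 2 * (j * j) - 2 * j by rewrite mulnBr muln1 mulnA.
have e2 : j.+1 * (2 * n - 3) = j * (2 * n - 3) + (2 * n - 3) by rewrite mulSnr.
have e3 : 2 * j.+1 * (j.+1 - 1) = 2 * (j * j) + 2 * j by rewrite subn1 /= mulnS mulnC mulnA; lia.
have e4 : j <= j * j by case: j {IH h h2 e1 e2 e3} => // j; rewrite mulSn leq_addr.
rewrite e2 e3; rewrite e1 in h2; move: h2 e4.
move: (Ssum (2 * j + 1)) (n %/ 2) (j * j) (j * (2 * n - 3)) => X m A B; lia.
Qed.

Lemma S_final : (n ^ 2)./2 - 1 <= Ssum n.-1.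
Proof.
rewrite -divn2.
have hm := divn_eq n 2.
move: (n %/ 2) hm => m hm.
case: (boolP (n %% 2 == 0)) => /eqP hp.
  rewrite hp addn0 in hm.
  have := Ssum_odd (j := m - 1) ltac:(lia).
  have -> : 2 * (m - 1) + 1 = n.-1 by lia.
  have -> : n %/ 2 = m by lia.
  have -> : n ^ 2 %/ 2 = 2 * m * m.
    by rewrite {1}hm expnMn -[2 ^ 2]/(2 * 2) mulnC -!mulnA mulKn //; lia.
  nia.
have hp1 : n %% 2 = 1 by lia.
rewrite hp1 in hm.
have := Ssum_odd (j := m - 1) ltac:(lia).
have -> : n.-1 = (2 * (m - 1) + 1).+1 by lia.
rewrite /Ssum big_ord_recr /= -/(Ssum _) D_odd; last by lia.
have -> : n %/ 2 = m by lia.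
have -> : n ^ 2 %/ 2 = 2 * m * m + 2 * m.
  rewrite {1}hm.
  have -> : (m * 2 + 1) ^ 2 = (2 * m * m + 2 * m) * 2 + 1 by rewrite !expnS expn0; nia.
  move: (2 * m * m + 2 * m) => X; lia.
nia.
Qed.

End Zig.


Lemma part2_upper n (e : rel 'I_n) : 3 <= n -> simple_graph e -> connected_graph e ->
  Tmax e <= (n ^ 2)./2 - 1.
Proof.
move=> hn [esym _] conn.
have h0 : 0 < #|'I_n| by rewrite card_ord; lia.
have [c hc] := center_exists esym conn h0.
rewrite card_ord in hc.
apply/bigmax_leqP => p _.
have h1 : 1 < #|'I_n| by rewrite card_ord; lia.
have := perm_cost_bound esym conn p c h1.
rewrite -divn2; lia.
Qed.

Lemma path_Tmax n : 3 <= n -> Tmax (@epath n) = (n ^ 2)./2 - 1.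
Proof.
move=> hn; apply/eqP; rewrite eqn_leq part2_upper ?path_simple ?path_conn //=.
  have inj : injective (fun i : 'I_n => Ordinal (gz_lt hn (ltn_ord i))).
    move=> i j [] /(gz_inj hn (ltn_ord i) (ltn_ord j)); exact: val_inj.
  apply: leq_trans (comm_time_le_Tmax _ (perm inj)).
  apply: leq_trans (S_final hn) _.
  rewrite /comm_time.
  apply: leq_trans (cost_cabs _).
  rewrite -map_comp (eq_map (g := fun i : 'I_n => gz n i)); last by move=> i /=; rewrite permE.
  rewrite map_comp val_enum_ord.
  have -> : n = (n.-1).+1 by lia.
  by rewrite cabs_iota.
exact: path_simple.
exact: path_conn.
Qed.

Theorem theorem1 (n : nat) (hn : 3 <= n) :
  ((forall e : rel 'I_n, simple_graph e -> connected_graph e ->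
      Tmin e <= 2 * n - 4) /\
   (exists e : rel 'I_n, [/\ simple_graph e, connected_graph e &
      Tmin e = 2 * n - 4])) /\
  ((forall e : rel 'I_n, simple_graph e -> connected_graph e ->
      Tmax e <= (n ^ 2)./2 - 1) /\
   (exists e : rel 'I_n, [/\ simple_graph e, connected_graph e &
      Tmax e = (n ^ 2)./2 - 1])).
Proof.
split; split.
- by move=> e; apply: part1_upper.
- exists (@estar n); split; [exact: star_simple | exact: star_conn | exact: star_Tmin].
- by move=> e; apply: part2_upper.
- exists (@epath n); split; [exact: path_simple | exact: path_conn | exact: path_Tmax].
Qed.
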